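(* Let $L$ be a finite-dimensional simple Lie algebra over a field $F$ such that every proper subalgebra of $L$ is triangulable on $L$. Then: (1) if $M$ is a maximal subalgebra of $L$, then either $M$ is abelian and no non-zero element of $M$ acts nilpotently on $L$, or $\mathrm{nil}(M)$ is a non-zero maximal nil subalgebra of $L$; (2) if $K$ is a non-zero maximal nil subalgebra of $L$, then the normalizer $N_L(K)$ of $K$ in $L$ is a maximal subalgebra of $L$; (3) for any two different maximal subalgebras $M_1,M_2$ of $L$, no non-zero element of $M_1\cap M_2$ acts nilpotently on $L$ (in particular, $M_1\cap M_2$ is abelian); (4) $L$ is two-generated.
   Context: A subalgebra $S$ of $L$ is triangulable on $L$ if $\mathrm{ad}_L S=\{\mathrm{ad}_L x\mid x\in S\}$ is a Lie algebra of linear transformations of $L$ which is simultaneously triangulable over the algebraic closure of $F$ (equivalently, every element of $S^2$ acts nilpotently on $L$). An element $x$ acts nilpotently on $L$ if $\mathrm{ad}_L x$ is nilpotent. A subalgebra is nil on $L$ if all its elements act nilpotently on $L$; a maximal nil subalgebra is a subalgebra nil on $L$ which is maximal (under inclusion) among subalgebras nil on $L$. For a subalgebra $S$, $\mathrm{nil}(S)$ is the unique maximal ideal of $S$ consisting of elements acting nilpotently on $L$. A Lie algebra is two-generated if it is generated as a Lie algebra by two of its elements. *)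

(* Defs.v *)
From HB Require Import structures.
From mathcomp Require Import all_boot all_order all_algebra.
Set Implicit Arguments. Unset Strict Implicit. Unset Printing Implicit Defensive.
Import GRing.Theory.
Local Open Scope ring_scope.

Section LieDefs.
Variables (F : fieldType) (L : vectType F) (br : L -> L -> L).

Definition lie_axioms : Prop :=
  [/\ (forall (a : F) (x y z : L), br (a *: x + y) z = a *: br x z + br y z),
      (forall (a : F) (x y z : L), br x (a *: y + z) = a *: br x y + br x z),
      (forall x : L, br x x = 0) &
      (forall x y z : L, br x (br y z) + br y (br z x) + br z (br x y) = 0)].

Definition is_subalgebra (S : {vspace L}) : Prop :=
  forall x y, x \in S -> y \in S -> br x y \in S.

Definition is_ideal_of (S I : {vspace L}) : Prop :=
  (I <= S)%VS /\ forall x y, x \in S -> y \in I -> br x y \in I.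

Definition is_abelian (S : {vspace L}) : Prop :=
  forall x y, x \in S -> y \in S -> br x y = 0.

Definition is_simple : Prop :=
  ~ is_abelian fullv /\
  forall I : {vspace L}, is_ideal_of fullv I -> I = 0%VS \/ I = fullv.

Definition acts_nil (x : L) : Prop :=
  exists n : nat, forall y : L, iter n (br x) y = 0.

(* matrix of ad_L x in the basis b := vbasis fullv of L (row convention:
   row i = coordinates of [x, b_i]) *)
Definition ad_mx (x : L) : 'M[F]_(\dim (fullv : {vspace L})) :=
  \matrix_(i, j) coord (vbasis fullv) j (br x (tnth (vbasis fullv) i)).

(* ad_L S is simultaneously triangulable over an algebraically closed
   extension of F (equivalently, over the algebraic closure of F). *)
Definition triangulable_on (S : {vspace L}) : Prop :=
  exists (K : closedFieldType) (f : {rmorphism F -> K})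
         (P : 'M[K]_(\dim (fullv : {vspace L}))),
    P \in unitmx /\
    forall x, x \in S -> is_trig_mx (P *m map_mx f (ad_mx x) *m invmx P).

Definition is_nil_on (S : {vspace L}) : Prop :=
  forall x, x \in S -> acts_nil x.

Definition maximal_subalgebra (M : {vspace L}) : Prop :=
  [/\ is_subalgebra M, M != fullv%VS &
      forall S : {vspace L}, is_subalgebra S -> (M <= S)%VS ->
        S = M \/ S = fullv].

Definition maximal_nil_subalgebra (K : {vspace L}) : Prop :=
  [/\ is_subalgebra K, is_nil_on K &
      forall S : {vspace L}, is_subalgebra S -> is_nil_on S -> (K <= S)%VS ->
        S = K].

Definition is_nil_of (S N : {vspace L}) : Prop :=
  [/\ is_ideal_of S N, is_nil_on N &
      forall I : {vspace L}, is_ideal_of S I -> is_nil_on I -> (I <= N)%VS].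

Definition is_normalizer (K N : {vspace L}) : Prop :=
  forall x, x \in N <-> (forall k, k \in K -> br x k \in K).

Definition two_generated : Prop :=
  exists x y : L, forall S : {vspace L}, is_subalgebra S ->
    x \in S -> y \in S -> S = fullv.

End LieDefs.

(* Main.v *)
Require Import Defs.
From HB Require Import structures.
From mathcomp Require Import all_boot all_order all_algebra.
From Stdlib Require Import Classical Lia.
From mathcomp Require Import zify.
Set Implicit Arguments. Unset Strict Implicit. Unset Printing Implicit Defensive.
Import GRing.Theory.
Local Open Scope ring_scope.

Section Trig.
Variables (R : idomainType) (n : nat).

Definition slow (m : nat) (A : 'M[R]_n) :=
  forall i j : 'I_n, (i < j + m)%N -> A i j = 0.

Lemma slowM m k (A B : 'M[R]_n) : slow m A -> slow k B -> slow (m + k) (A *m B).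
Proof.
move=> hA hB i j lt; rewrite mxE big1 // => l _.
case: (ltnP i (l + m)) => [h|h]; first by rewrite hA // mul0r.
by rewrite hB ?mulr0 //; rewrite -(ltn_add2r m); apply: leq_ltn_trans h _; rewrite addnAC -addnA.
Qed.

Lemma slow_n (A : 'M[R]_n) : slow n A -> A = 0.
Proof. by move=> h; apply/matrixP => i j; rewrite mxE h // (leq_trans (ltn_ord i)) // leq_addl. Qed.

Lemma slow0 (A : 'M[R]_n) : is_trig_mx A -> slow 0 A.
Proof. by move/is_trig_mxP => h i j; rewrite addn0; apply: h. Qed.

Lemma diag_trigM (A B : 'M[R]_n) : is_trig_mx A -> is_trig_mx B -> forall i, (A *m B) i i = A i i * B i i.
Proof.
move=> /is_trig_mxP hA /is_trig_mxP hB i; rewrite mxE (bigD1 i) //= big1 ?addr0 // => l nli.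
case: (ltngtP i l) => [h|h|h]; first by rewrite hA ?mul0r.
  by rewrite hB ?mulr0.
have e : l = i by apply: val_inj. by rewrite e eqxx in nli.
Qed.

Lemma trigM (A B : 'M[R]_n) : is_trig_mx A -> is_trig_mx B -> is_trig_mx (A *m B).
Proof.
move=> hA hB; apply/is_trig_mxP => i j h.
by apply: (slowM (slow0 hA) (slow0 hB)); rewrite !addn0.
Qed.

Lemma trig_pow_diag (A : 'M[R]_n) k : is_trig_mx A -> forall i, (A ^+ k) i i = (A i i) ^+ k.
Proof.
move=> hA; elim: k => [|k IH] i; first by rewrite !expr0 mxE eqxx.
have hk : is_trig_mx (A ^+ k).
  by elim: (k) => [|kk IHk]; [apply/is_trig_mxP => a b h; rewrite expr0 mxE; case: eqP => // e; move: h; rewrite e ltnn|rewrite exprS -mulmxE; apply: trigM].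
by rewrite exprS -mulmxE diag_trigM // IH exprS.
Qed.

Lemma trig_nil_diag (A : 'M[R]_n) k : is_trig_mx A -> A ^+ k = 0 -> forall i, A i i = 0.
Proof.
move=> hA hk i; have := trig_pow_diag k hA i; rewrite hk mxE => /esym/eqP.
by rewrite expf_eq0 => /andP [_ /eqP].
Qed.

Lemma trig_diag0_slow1 (A : 'M[R]_n) : is_trig_mx A -> (forall i, A i i = 0) -> slow 1 A.
Proof.
move=> /is_trig_mxP hA hd i j; rewrite addn1 ltnS leq_eqVlt => /orP [/eqP h|h].
  by have -> : i = j by apply: val_inj. 
by apply: hA.
Qed.

Lemma slow_pow (A : 'M[R]_n) k : slow 1 A -> slow k (A ^+ k).
Proof.
move=> h; elim: k => [|k IH]; first by move=> i j; rewrite addn0 expr0 mxE; case: eqP => // ->; rewrite ltnn.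
by rewrite exprS -mulmxE -addn1 addnC; apply: slowM.
Qed.
Lemma slow_lin m c (A B : 'M[R]_n) : slow m A -> slow m B -> slow m (c *: A + B).
Proof. by move=> hA hB i j h; rewrite !mxE hA // hB // mulr0 addr0. Qed.
Lemma mxBE (A B : 'M[R]_n) i j : (A - B) i j = A i j - B i j.
Proof. by rewrite !mxE. Qed.
End Trig.

Section LieBasic.
Variables (F : fieldType) (L : vectType F) (br : L -> L -> L).
Hypothesis lie : lie_axioms br.

Local Notation n := (\dim (fullv : {vspace L})).
Local Notation e := (vbasis (fullv : {vspace L})).
Local Notation r := (passmx.rVof e).

Lemma ebasis : basis_of fullv e. Proof. exact: vbasisP. Qed.

Lemma brDZl a x y z : br (a *: x + y) z = a *: br x z + br y z.
Proof. by case: lie. Qed.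
Lemma brDZr a x y z : br x (a *: y + z) = a *: br x y + br x z.
Proof. by case: lie. Qed.
Lemma brxx x : br x x = 0. Proof. by case: lie. Qed.
Lemma jacobi x y z : br x (br y z) + br y (br z x) + br z (br x y) = 0.
Proof. by case: lie. Qed.

Lemma br0l z : br 0 z = 0.
Proof.
have := brDZl 1 0 0 z; rewrite !scale1r addr0 => /(congr1 (fun t => t - br 0 z)).
by rewrite subrr addrK => h; exact: esym h.
Qed.
Lemma br0r z : br z 0 = 0.
Proof.
have := brDZr 1 z 0 0; rewrite !scale1r addr0 => /(congr1 (fun t => t - br z 0)).
by rewrite subrr addrK => h; exact: esym h.
Qed.
Lemma brDl x y z : br (x + y) z = br x z + br y z.
Proof. by rewrite -(scale1r x) brDZl !scale1r. Qed.
Lemma brDr x y z : br x (y + z) = br x y + br x z.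
Proof. by rewrite -(scale1r y) brDZr !scale1r. Qed.
Lemma brZl a x z : br (a *: x) z = a *: br x z.
Proof. by rewrite -(addr0 (a *: x)) brDZl br0l addr0. Qed.
Lemma brZr a x z : br z (a *: x) = a *: br z x.
Proof. by rewrite -(addr0 (a *: x)) brDZr br0r addr0. Qed.
Lemma brN x y : br x y = - br y x.
Proof.
have := brxx (x + y); rewrite brDl !brDr !brxx add0r addr0 => /eqP.
by rewrite addr_eq0 => /eqP.
Qed.
Lemma brNl x y : br (- x) y = - br x y.
Proof. by rewrite -scaleN1r brZl scaleN1r. Qed.
Lemma brNr x y : br x (- y) = - br x y.
Proof. by rewrite -scaleN1r brZr scaleN1r. Qed.
Lemma brBl x y z : br (x - y) z = br x z - br y z.
Proof. by rewrite brDl brNl. Qed.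
Lemma brBr x y z : br x (y - z) = br x y - br x z.
Proof. by rewrite brDr brNr. Qed.

Lemma jac2 x y z : br (br x y) z = br x (br y z) - br y (br x z).
Proof.
have := jacobi x y z => /eqP; rewrite addr_eq0 => /eqP h.
by rewrite brN -h [br z x]brN brNr.
Qed.

Lemma br_sumr x (I : Type) (s : seq I) (P : pred I) (c : I -> L) :
  br x (\sum_(i <- s | P i) c i) = \sum_(i <- s | P i) br x (c i).
Proof. exact: (big_morph (br x) (brDr x) (br0r x)). Qed.

Lemma r_br x y : r (br x y) = r y *m ad_mx br x.
Proof.
apply/rowP => j.
rewrite -[in LHS](passmx.rVofK ebasis y) /passmx.vecof br_sumr.
rewrite !mxE linear_sum /=; apply: eq_bigr => i _.
by rewrite brZr linearZ /= !mxE (tnth_nth 0).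
Qed.

Lemma r_eq0 y : r y = 0 -> y = 0.
Proof. by move/eqP; rewrite (passmx.rVof_eq0 ebasis) => /eqP. Qed.

Lemma mx_ext (A B : 'M[F]_n) : (forall y, r y *m A = r y *m B) -> A = B.
Proof.
move=> h; apply/row_matrixP => i; rewrite !rowE.
by have := h (passmx.vecof e (delta_mx 0 i)); rewrite (passmx.vecofK ebasis).
Qed.

Lemma ad_lin a x y : ad_mx br (a *: x + y) = a *: ad_mx br x + ad_mx br y.
Proof.
apply: mx_ext => z; rewrite -r_br brDZl mulmxDr -scalemxAr -!r_br.
exact: passmx.rVof_linear.
Qed.

Lemma ad_br x y : ad_mx br (br x y) = ad_mx br y *m ad_mx br x - ad_mx br x *m ad_mx br y.
Proof.
apply: mx_ext => z; rewrite mulmxBr !mulmxA -!r_br jac2.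
by rewrite -scaleN1r addrC passmx.rVof_linear scaleN1r addrC.
Qed.

Lemma r_iter k x y : r (iter k (br x) y) = r y *m ad_mx br x ^+ k.
Proof.
elim: k => [|k IH]; first by rewrite expr0 mulmx1.
by rewrite iterS r_br IH exprSr -mulmxE mulmxA.
Qed.

Lemma nil_mx x : acts_nil br x <-> exists k, ad_mx br x ^+ k = 0.
Proof.
split=> [[k hk]|[k hk]]; exists k.
  apply: mx_ext => y; rewrite -r_iter hk mulmx0.
  by have -> : passmx.rVof e 0 = 0 by apply/rowP => i; rewrite !mxE linear0.
by move=> y; apply: r_eq0; rewrite r_iter hk mulmx0.
Qed.

Definition pA (xs : seq L) := foldr (fun x M => M *m ad_mx br x) 1%:M xs.

Lemma r_fold xs y : r (foldr br y xs) = r y *m pA xs.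
Proof.
elim: xs => [|x xs IH] /=; first by rewrite mulmx1.
by rewrite r_br IH mulmxA.
Qed.

End LieBasic.

Section Tri.
Variables (F : fieldType) (L : vectType F) (br : L -> L -> L).
Hypothesis lie : lie_axioms br.
Local Notation n := (\dim (fullv : {vspace L})).
Local Notation e := (vbasis (fullv : {vspace L})).
Local Notation r := (passmx.rVof e).
Local Notation ad := (ad_mx br).

Section Conj.
Variables (K : fieldType) (f : {rmorphism F -> K}) (P : 'M[K]_n).
Hypothesis Pu : P \in unitmx.
Definition cj (M : 'M[F]_n) := P *m map_mx f M *m invmx P.

Lemma cjM M N : cj (M *m N) = cj M *m cj N.
Proof. by rewrite /cj map_mxM !mulmxA mulmxKV. Qed.

Lemma cj1 : cj 1%:M = 1%:M.
Proof. by rewrite /cj map_mx1 mulmx1 mulmxV. Qed.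

Lemma cjD M N : cj (M + N) = cj M + cj N.
Proof. by rewrite /cj map_mxD mulmxDr mulmxDl. Qed.
Lemma cjZ a M : cj (a *: M) = f a *: cj M.
Proof. by rewrite /cj map_mxZ -scalemxAr -scalemxAl. Qed.
Lemma cjB M N : cj (M - N) = cj M - cj N.
Proof. by rewrite /cj map_mxB mulmxBr mulmxBl. Qed.

Lemma cjX M k : cj (M ^+ k) = cj M ^+ k.
Proof.
elim: k => [|k IH]; first by rewrite !expr0; exact: cj1.
by rewrite !exprS -!mulmxE cjM IH.
Qed.

Lemma cj_eq0 M : cj M = 0 -> M = 0.
Proof.
rewrite /cj => h.
have h2 : map_mx f M = 0.
  have e1 : invmx P *m (P *m map_mx f M *m invmx P) *m P = map_mx f M.
    by rewrite !mulmxA mulVmx // mul1mx mulmxKV.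
  by rewrite -e1 h mulmx0 mul0mx.
by apply: (@map_mx_inj _ _ f); rewrite h2 map_mx0.
Qed.
End Conj.

Lemma trigB (K : fieldType) (A B : 'M[K]_n) : is_trig_mx A -> is_trig_mx B -> is_trig_mx (A - B).
Proof.
move=> /is_trig_mxP hA /is_trig_mxP hB; apply/is_trig_mxP => i j h.
by rewrite !mxE hA // hB // subr0.
Qed.

Lemma slow_nil x (K : fieldType) (f : {rmorphism F -> K}) (P : 'M[K]_n) :
  P \in unitmx -> slow 1 (cj f P (ad x)) -> acts_nil br x.
Proof.
move=> Pu h; apply/(nil_mx lie); exists n; apply: (cj_eq0 (f:=f) Pu).
by rewrite cjX //; apply: slow_n; apply: slow_pow h.
Qed.

Lemma nil_slow x (K : fieldType) (f : {rmorphism F -> K}) (P : 'M[K]_n) :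
  P \in unitmx -> is_trig_mx (cj f P (ad x)) -> acts_nil br x -> slow 1 (cj f P (ad x)).
Proof.
move=> Pu ht /(nil_mx lie) [k hk]; apply: trig_diag0_slow1 => //.
apply: (trig_nil_diag (k := k)) => //; by rewrite -cjX // hk /cj map_mx0 mulmx0 mul0mx.
Qed.

Variable S : {vspace L}.
Hypothesis T : triangulable_on br S.

Lemma tri_lin a x y : x \in S -> y \in S -> acts_nil br x -> acts_nil br y ->
  acts_nil br (a *: x + y).
Proof.
case: T => K [f [P [Pu hT]]] xS yS nx ny.
apply: (slow_nil (f:=f) Pu); rewrite (ad_lin lie) cjD cjZ.
have sx := nil_slow Pu (hT _ xS) nx; have sy := nil_slow Pu (hT _ yS) ny.
exact: slow_lin.
Qed.

Lemma tri_br x y : x \in S -> y \in S -> acts_nil br (br x y).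
Proof.
case: T => K [f [P [Pu hT]]] xS yS.
have tx := hT _ xS; have ty := hT _ yS.
apply: (slow_nil (f:=f) Pu); rewrite (ad_br lie) cjB !cjM //.
apply: trig_diag0_slow1; first by apply: trigB; apply: trigM.
by move=> i; rewrite mxBE (diag_trigM ty tx) (diag_trigM tx ty) mulrC subrr.
Qed.

Lemma tri_fold xs : size xs = n -> (forall x, x \in xs -> x \in S /\ acts_nil br x) ->
  forall y, foldr br y xs = 0.
Proof.
case: T => K [f [P [Pu hT]]] hs hx y.
have : slow (size xs) (cj f P (pA br xs)).
  elim: xs {hs} hx => [|x xs IH] hx /=.
    by rewrite cj1 // => i j; rewrite addn0 mxE; case: eqP => // ->; rewrite ltnn.
  rewrite cjM // -addn1; apply: slowM.
    by apply: IH => z hz; apply: hx; rewrite inE hz orbT.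
  have [xS nx] := hx x (mem_head _ _).
  exact: nil_slow Pu (hT _ xS) nx.
rewrite hs => /slow_n /(cj_eq0 Pu) h0.
by apply: r_eq0; rewrite (r_fold lie) h0 mulmx0.
Qed.
End Tri.

Section Generic.
Variables (F : fieldType) (L : vectType F) (br : L -> L -> L).

Lemma dim_lt (U V : {vspace L}) : (U <= V)%VS -> U != V -> (\dim U < \dim V)%N.
Proof. by move=> sUV nUV; rewrite (ltn_leqif (dimv_leqif_eq sUV)). Qed.

Lemma dim_lt_mem (U V : {vspace L}) y : (U <= V)%VS -> y \in V -> y \notin U -> (\dim U < \dim V)%N.
Proof.
move=> sUV yV yU; apply: dim_lt => //; apply/eqP => E; by rewrite E yV in yU.
Qed.

Lemma vsp_pred (P : L -> Prop) : P 0 -> (forall a x y, P x -> P y -> P (a *: x + y)) ->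
  exists U : {vspace L}, forall x, x \in U <-> P x.
Proof.
move=> P0 Plin.
suff H : forall k (U : {vspace L}), (forall x, x \in U -> P x) ->
    (\dim (fullv : {vspace L}) - \dim U <= k)%N -> exists W : {vspace L}, forall x, x \in W <-> P x.
  apply: (H _ 0%VS); last exact: leq_subr.
  by move=> x; rewrite memv0 => /eqP ->.
have step : forall (U : {vspace L}), (forall x, x \in U -> P x) ->
   (forall x, x \in U <-> P x) \/
   exists U' : {vspace L}, (forall x, x \in U' -> P x) /\ (\dim U < \dim U')%N.
  move=> U hU; case: (classic (forall x, P x -> x \in U)) => hall.
    by left => x; split; [apply: hU|apply: hall].
  right; have [x hx] := not_all_ex_not _ _ hall.
  have [Px xU] := imply_to_and _ _ hx.
  have xU' : x \in (U + <[x]>)%VS by apply: (subvP (addvSr U _)); exact: memv_line.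
  exists (U + <[x]>)%VS; split.
    move=> y /memv_addP [u uU [v /vlineP [a ->] ->]]; rewrite addrC; apply: Plin => //; exact: hU.
  by apply: (dim_lt_mem (addvSl _ _) xU'); apply/negP.
elim=> [|k IH] U hU hd; case: (step U hU) => [h|[U' [hU' lt]]]; try by exists U.
  by have le := dimvS (subvf U'); exfalso; move: hd lt le; lia.
by have le := dimvS (subvf U'); apply: (IH _ hU'); move: hd lt le; lia.
Qed.

Lemma words (Kp : L -> Prop) (U V : {vspace L}) (N : nat) :
  (forall xs, size xs = N -> (forall x, x \in xs -> Kp x) -> forall y, foldr br y xs = 0) ->
  (forall k u, Kp k -> u \in U -> br k u \in U) ->
  (forall k v, Kp k -> v \in V -> br k v \in V) ->
  forall v0, v0 \in V -> v0 \notin U ->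
  exists v, [/\ v \in V, v \notin U & forall k, Kp k -> br k v \in U].
Proof.
move=> hN hU hV v0 v0V v0U.
pose Q m := exists xs, [/\ size xs = m, (forall x, x \in xs -> Kp x) & foldr br v0 xs \notin U].
have Q0 : Q 0%N by exists [::].
have nQN : ~ Q N.
  by move=> [xs [hs hK hv]]; rewrite (hN xs hs hK) mem0v in hv.
have [m [[xs [hs hK hv]] hn]] : exists m, Q m /\ ~ Q m.+1.
  apply: NNPP => H; apply: nQN.
  suff : forall m, Q m by [].
  elim=> // m IH; apply: NNPP => nq; apply: H; exists m; tauto.
exists (foldr br v0 xs); split => //.
  elim: xs {hs hv} hK => [|x xs IHx] hK //=.
  apply: hV; first by apply: hK; exact: mem_head.
  by apply: IHx => z hz; apply: hK; rewrite inE hz orbT.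
move=> k hk; case: (boolP (br k (foldr br v0 xs) \in U)) => // h; exfalso.
apply: hn; exists (k :: xs); split => //=; first by rewrite hs.
by move=> z; rewrite inE => /orP [/eqP ->|]; [|apply: hK].
Qed.

Lemma exists_max (S : {vspace L}) : is_subalgebra br S -> S != fullv ->
  exists M, maximal_subalgebra br M /\ (S <= M)%VS.
Proof.
suff H : forall k S, is_subalgebra br S -> S != fullv ->
    (\dim (fullv : {vspace L}) - \dim S <= k)%N ->
    exists M, maximal_subalgebra br M /\ (S <= M)%VS.
  by move=> hS nS; apply: (H _ S hS nS (leqnn _)).
elim=> [|k IH] {}S hS nS hd;
  case: (classic (exists T, [/\ is_subalgebra br T, (S <= T)%VS, T != S & T != fullv])) => [[T [hT sST nTS nTf]]|hno].
- have lt := dim_lt sST ltac:(by rewrite eq_sym).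
  have le := dimvS (subvf T).
  by exfalso; move: hd lt le; lia.
- exists S; split => //; split => // T hT sST.
  case: (classic (T = S)) => [->|nTS]; [by left|right].
  apply: NNPP => nTf; apply: hno; exists T; split => //; apply/eqP => //.
- have lt := dim_lt sST ltac:(by rewrite eq_sym).
  have le := dimvS (subvf T).
  have [M [hM sTM]] := IH T hT nTf ltac:(move: hd lt le; lia).
  by exists M; split => //; apply: subv_trans sTM.
- exists S; split => //; split => // T hT sST.
  case: (classic (T = S)) => [->|nTS]; [by left|right].
  apply: NNPP => nTf; apply: hno; exists T; split => //; apply/eqP => //.
Qed.
End Generic.

Section Main.
Variables (F : fieldType) (L : vectType F) (br : L -> L -> L).
Hypothesis lie : lie_axioms br.
Hypothesis simp : is_simple br.
Hypothesis tri : forall S : {vspace L}, is_subalgebra br S -> S != fullv%VS -> triangulable_on br S.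
Local Notation n := (\dim (fullv : {vspace L})).
Local Notation nil := (acts_nil br).

Lemma ideal_triv (I : {vspace L}) : (forall x y, y \in I -> br x y \in I) -> I = 0%VS \/ I = fullv.
Proof. move=> h; apply: simp.2; split; [exact: subvf|by move=> x y _; apply: h]. Qed.

Lemma not_abel : ~ (forall x y : L, br x y = 0).
Proof. by move=> h; apply: simp.1 => x y _ _; apply: h. Qed.

Lemma nil0 : nil 0.
Proof. by exists 1%N => y /=; rewrite (br0l lie). Qed.

Lemma full_neq0 : (fullv : {vspace L}) != 0%VS.
Proof.
apply/eqP => h; apply: not_abel => x y.
have : x \in (0%VS : {vspace L}) by rewrite -h memvf.
by rewrite memv0 => /eqP ->; rewrite (br0l lie).
Qed.

Lemma neq_full_ex (M : {vspace L}) : M != fullv -> exists v, v \notin M.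
Proof.
move=> nM; case: (boolP (fullv <= M)%VS) => [sfM|/subvPn [v _ vM]]; last by exists v.
by rewrite eqEsubv sfM subvf in nM.
Qed.

Lemma subalg0 : is_subalgebra br 0%VS.
Proof. by move=> x y; rewrite !memv0 => /eqP -> _; rewrite (br0l lie). Qed.

Lemma subalg_line (v : L) : is_subalgebra br <[v]>%VS.
Proof.
move=> x y /vlineP [a ->] /vlineP [b ->].
by rewrite (brZl lie) (brZr lie) (brxx lie) !scaler0 mem0v.
Qed.

Lemma line_ideal_abel (v : L) : <[v]>%VS = fullv -> False.
Proof.
move=> h; apply: not_abel => x y.
have : x \in <[v]>%VS by rewrite h memvf.
have : y \in <[v]>%VS by rewrite h memvf.
move=> /vlineP [b ->] /vlineP [a ->].
by rewrite (brZl lie) (brZr lie) (brxx lie) !scaler0.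
Qed.

Lemma add_line_subalg (M : {vspace L}) (v : L) : is_subalgebra br M ->
  (forall k, k \in M -> br k v \in M) -> is_subalgebra br (M + <[v]>)%VS.
Proof.
move=> hM hv x y /memv_addP [m mM [u /vlineP [a ->] ->]] /memv_addP [m' m'M [u' /vlineP [b ->] ->]].
apply: (subvP (addvSl M <[v]>%VS)).
rewrite (brDl lie) !(brDr lie) !(brZl lie) !(brZr lie) (brxx lie) !scaler0 addr0.
rewrite [br v m'](brN lie).
by rewrite !memvD ?memvZ ?memvN ?(hM _ _ mM m'M) ?(hv _ mM) ?(hv _ m'M).
Qed.

Lemma not_all_nil : ~ (forall x, nil x).
Proof.
move=> hall.
have n0 : (0%VS : {vspace L}) != fullv by rewrite eq_sym full_neq0.
have [M [[hM nM maxM] _]] := exists_max subalg0 n0.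
have TM := tri hM nM.
have hw := @words _ _ br (fun k => k \in M) M fullv n
  (fun xs hs hK => tri_fold lie TM hs (fun x hx => conj (hK x hx) (hall x)))
  (fun k u hk hu => hM _ _ hk hu) (fun _ _ _ _ => memvf _).
have [v0 v0M] := neq_full_ex nM.
have [v [_ vM hv]] := hw v0 (memvf _) v0M.
have hS := add_line_subalg hM hv.
have vS : v \in (M + <[v]>)%VS by apply: (subvP (addvSr M _)); exact: memv_line.
have [eS|eS] := maxM _ hS (addvSl _ _).
  by rewrite -eS vS in vM.
have idM : forall x y, y \in M -> br x y \in M.
  move=> x y yM; have : x \in (M + <[v]>)%VS by rewrite eS memvf.
  move=> /memv_addP [m mM [u /vlineP [a ->] ->]].
  by rewrite (brDl lie) (brZl lie) (brN lie v) memvD ?memvZ ?memvN ?(hM _ _ mM yM) ?(hv _ yM).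
case: (ideal_triv idM) => hM0.
  by apply: (line_ideal_abel (v:=v)); rewrite -eS hM0 add0v.
by rewrite hM0 eqxx in nM.
Qed.

Lemma nilsp (S : {vspace L}) : triangulable_on br S ->
  exists N : {vspace L}, forall x, x \in N <-> x \in S /\ nil x.
Proof.
move=> TS; apply: vsp_pred; first by split; [exact: mem0v|exact: nil0].
move=> a x y [xS nx] [yS ny]; split; first by rewrite memvD ?memvZ.
exact: (tri_lin lie TS).
Qed.

Lemma normsp (K : {vspace L}) :
  exists N : {vspace L}, forall x, x \in N <-> (forall k, k \in K -> br x k \in K).
Proof.
apply: vsp_pred; first by move=> k _; rewrite (br0l lie) mem0v.
by move=> a x y hx hy k hk; rewrite (brDZl lie) memvD ?memvZ ?hx ?hy.
Qed.

Lemma norm_subalg (K N : {vspace L}) : (forall x, x \in N <-> (forall k, k \in K -> br x k \in K)) ->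
  is_subalgebra br N.
Proof.
move=> hN x y /hN hx /hN hy; apply/hN => k hk.
by rewrite (jac2 lie) memvB //; [apply: hx; apply: hy | apply: hy; apply: hx].
Qed.

Lemma norm_sub (K N : {vspace L}) : (forall x, x \in N <-> (forall k, k \in K -> br x k \in K)) ->
  is_subalgebra br K -> (K <= N)%VS.
Proof. by move=> hN hK; apply/subvP => x xK; apply/hN => k hk; apply: hK. Qed.


Lemma nil_max_facts (M N : {vspace L}) : maximal_subalgebra br M ->
  (forall x, x \in N <-> x \in M /\ nil x) -> N != 0%VS ->
  [/\ is_nil_of br M N, (forall x, (forall k, k \in N -> br x k \in N) -> x \in M)
    & maximal_nil_subalgebra br N].
Proof.
move=> [hM nM maxM] hN nN0; have TM := tri hM nM.
have NM : (N <= M)%VS by apply/subvP => x /hN [].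
have idN : forall x y, x \in M -> y \in N -> br x y \in N.
  move=> x y xM /hN [yM _]; apply/hN; split; [exact: hM | exact: (tri_br lie TM xM yM)].
have nilN : is_nil_on br N by move=> x /hN [].
have subN : is_subalgebra br N by move=> x y xN yN; apply: idN => //; apply: (subvP NM).
have normM : forall x, (forall k, k \in N -> br x k \in N) -> x \in M.
  have [Z hZ] := normsp N.
  have MZ : (M <= Z)%VS by apply/subvP => x xM; apply/hZ => k hk; exact: idN.
  have [eZ|eZ] := maxM _ (norm_subalg hZ) MZ.
    by move=> x hx; rewrite -eZ; apply/hZ.
  exfalso.
  have idN' : forall x y, y \in N -> br x y \in N.
    move=> x y yN; have xZ : x \in Z by rewrite eZ memvf.
    exact: (hZ x).1 xZ y yN.
  case: (ideal_triv idN') => h; first by rewrite h eqxx in nN0.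
  have sfM : (fullv <= M)%VS by rewrite -h.
  by rewrite eqEsubv sfM subvf in nM.
split => //.
- split; [by split|exact: nilN|].
  move=> I [IM hI] nI; apply/subvP => x xI; apply/hN; split; [exact: (subvP IM) | exact: nI].
- split => // S hS nS sNS.
  have Sf : S != fullv.
    by apply/eqP => eS; apply: not_all_nil => x; apply: nS; rewrite eS memvf.
  have TS := tri hS Sf.
  apply: NNPP => neq.
  have [v0 v0S v0N] : exists2 v0, v0 \in S & v0 \notin N.
    case: (boolP (S <= N)%VS) => [sSN|/subvPn //].
    by exfalso; apply: neq; apply/eqP; rewrite eqEsubv sSN sNS.
  have [v [vS vN hv]] := @words _ _ br (fun k => k \in N) N S n
    (fun xs hs hK => tri_fold lie TS hs (fun x hx => conj (subvP sNS _ (hK x hx)) (nilN x (hK x hx))))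
    (fun k u hk hu => subN _ _ hk hu) (fun k v hk hv => hS _ _ (subvP sNS _ hk) hv) v0 v0S v0N.
  have vM : v \in M.
    by apply: normM => k kN; rewrite (brN lie) memvN; exact: hv.
  have : v \in N by apply/hN; split => //; exact: nS.
  by rewrite (negPf vN).
Qed.

Lemma part1 (M : {vspace L}) : maximal_subalgebra br M ->
  (is_abelian br M /\ (forall x, x \in M -> acts_nil br x -> x = 0))
  \/ (exists N : {vspace L}, [/\ is_nil_of br M N, N != 0%VS & maximal_nil_subalgebra br N]).
Proof.
move=> hMax; have [hM nM _] := hMax; have TM := tri hM nM.
have [N hN] := nilsp TM.
case: (eqVneq N 0%VS) => [N0|nN0].
  left; split.
    move=> x y xM yM; have : br x y \in N by apply/hN; split; [exact: hM|exact: (tri_br lie TM xM yM)].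
    by rewrite N0 memv0 => /eqP.
  move=> x xM nx; have : x \in N by apply/hN.
  by rewrite N0 memv0 => /eqP.
right; exists N; have [a _ c] := nil_max_facts hMax hN nN0; by split.
Qed.

Lemma part2 (K : {vspace L}) : K != 0%VS -> maximal_nil_subalgebra br K ->
  exists N : {vspace L}, is_normalizer br K N /\ maximal_subalgebra br N.
Proof.
move=> nK0 [hK nK maxK]; have [Z hZ] := normsp K.
exists Z; split => //.
have KZ := norm_sub hZ hK; have Zsub := norm_subalg hZ.
have Zf : Z != fullv.
  apply/eqP => eZ.
  have idK : forall x y, y \in K -> br x y \in K.
    move=> x y yK; have xZ : x \in Z by rewrite eZ memvf.
    exact: (hZ x).1 xZ y yK.
  case: (ideal_triv idK) => h; first by rewrite h eqxx in nK0.
  by apply: not_all_nil => x; apply: nK; rewrite h memvf.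
split => // S hS sZS.
case: (classic (S = fullv)) => [->|Sf]; [by right|left].
have Sf' : S != fullv by apply/eqP.
have TS := tri hS Sf'; have [NS hNS] := nilsp TS.
have NSsub : is_subalgebra br NS.
  by move=> x y /hNS [xS _] /hNS [yS _]; apply/hNS; split; [exact: hS|exact: (tri_br lie TS xS yS)].
have NSnil : is_nil_on br NS by move=> x /hNS [].
have KS : (K <= S)%VS := subv_trans KZ sZS.
have KNS : (K <= NS)%VS by apply/subvP => x xK; apply/hNS; split; [exact: (subvP KS)|exact: nK].
have eK := maxK NS NSsub NSnil KNS.
have SZ : (S <= Z)%VS.
  apply/subvP => x xS; apply/hZ => k kK.
  have kS := subvP KS _ kK.
  have : br x k \in NS by apply/hNS; split; [exact: hS|exact: (tri_br lie TS xS kS)].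
  by rewrite eK.
by apply/eqP; rewrite eqEsubv SZ sZS.
Qed.

Lemma capsp (M1 M2 : {vspace L}) : maximal_subalgebra br M1 ->
  exists D : {vspace L}, forall x, x \in D <-> [/\ x \in M1, x \in M2 & nil x].
Proof.
move=> [hM1 nM1 _]; have TM1 := tri hM1 nM1.
apply: vsp_pred; first by split; rewrite ?mem0v //; exact: nil0.
move=> a x y [x1 x2 nx] [y1 y2 ny]; split; rewrite ?memvD ?memvZ //.
exact: (tri_lin lie TM1).
Qed.

Lemma side (M1 M3 D Dz : {vspace L}) :
  (forall M1' M3' D3 : {vspace L}, maximal_subalgebra br M1' -> maximal_subalgebra br M3' ->
     M1' != M3' -> (forall x, x \in D3 <-> [/\ x \in M1', x \in M3' & nil x]) ->
     (\dim D < \dim D3)%N -> D3 = 0%VS) ->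
  maximal_subalgebra br M1 -> maximal_subalgebra br M3 -> D != 0%VS ->
  (forall x, x \in D -> x \in M1 /\ nil x) -> is_subalgebra br D ->
  (forall x, x \in Dz <-> (forall k, k \in D -> br x k \in D)) -> (Dz <= M3)%VS -> M3 = M1.
Proof.
move=> IH h1 h3 nD0 hD Dsub hDz sDzM3.
apply: NNPP => n31.
have [hM1 nM1 max1] := h1; have [hM3 nM3 _] := h3.
have TM1 := tri hM1 nM1; have [N1 hN1] := nilsp TM1.
have DN1 : (D <= N1)%VS by apply/subvP => x /hD [x1 nx]; apply/hN1.
have DDz := norm_sub hDz Dsub.
case: (boolP (N1 <= D)%VS) => [sN1D | /subvPn [v0 v0N1 v0D]].
  have M1Dz : (M1 <= Dz)%VS.
    apply/subvP => x xM1; apply/hDz => k kD.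
    have [k1 nk] := hD k kD.
    apply: (subvP sN1D); apply/hN1; split; [exact: hM1|exact: (tri_br lie TM1 xM1 k1)].
  have [e|e] := max1 _ hM3 (subv_trans M1Dz sDzM3).
    by apply: n31.
  by rewrite e eqxx in nM3.
have [v [vN1 vD hv]] := @words _ _ br (fun k => k \in D) D N1 n
  (fun xs hs hK => tri_fold lie TM1 hs (fun x hx => hD x (hK x hx)))
  (fun k u hk hu => Dsub _ _ hk hu)
  (fun k u hk hu => ltac:(have [k1 _] := hD k hk; have [u1 _] := (hN1 u).1 hu;
                          apply/hN1; split; [exact: hM1|exact: (tri_br lie TM1 k1 u1)]))
  v0 v0N1 v0D.
have vM3 : v \in M3.
  by apply: (subvP sDzM3); apply/hDz => k kD; rewrite (brN lie) memvN; exact: hv.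
have [D3 hD3] := capsp M3 h1.
have DD3 : (D <= D3)%VS.
  apply/subvP => x xD; have [x1 nx] := hD x xD; apply/hD3; split => //.
  exact: (subvP sDzM3 _ (subvP DDz _ xD)).
have vD3 : v \in D3 by have [v1 nv] := (hN1 v).1 vN1; apply/hD3.
have lt := dim_lt_mem DD3 vD3 vD.
have n13 : M1 != M3 by apply/eqP => e; apply: n31; rewrite e.
have := IH M1 M3 D3 h1 h3 n13 hD3 lt => D30.
by move: DD3; rewrite D30 subv0 (negPf nD0).
Qed.

Lemma core_step (M1 M2 D : {vspace L}) :
  (forall M1' M3' D3 : {vspace L}, maximal_subalgebra br M1' -> maximal_subalgebra br M3' ->
     M1' != M3' -> (forall x, x \in D3 <-> [/\ x \in M1', x \in M3' & nil x]) ->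
     (\dim D < \dim D3)%N -> D3 = 0%VS) ->
  maximal_subalgebra br M1 -> maximal_subalgebra br M2 -> M1 != M2 ->
  (forall x, x \in D <-> [/\ x \in M1, x \in M2 & nil x]) -> D = 0%VS.
Proof.
move=> IH h1 h2 n12 hD; apply/eqP; apply: NNPP => /negP nD0.
have [hM1 nM1 _] := h1; have [hM2 nM2 _] := h2.
have TM1 := tri hM1 nM1.
have [Dz hDz] := normsp D.
have Dsub : is_subalgebra br D.
  move=> x y /hD [x1 x2 _] /hD [y1 y2 _]; apply/hD; split; [exact: hM1|exact: hM2|exact: (tri_br lie TM1 x1 y1)].
have Dzsub := norm_subalg hDz.
have Dzf : Dz != fullv.
  apply/eqP => eZ.
  have idD : forall x y, y \in D -> br x y \in D.
    move=> x y yD; have xZ : x \in Dz by rewrite eZ memvf.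
    exact: (hDz x).1 xZ y yD.
  case: (ideal_triv idD) => h; first by rewrite h eqxx in nD0.
  have sfM : (fullv <= M1)%VS by apply/subvP => x _; have /hD [] : x \in D by rewrite h memvf.
  by rewrite eqEsubv sfM subvf in nM1.
have [M3 [h3 sDzM3]] := exists_max Dzsub Dzf.
have e1 := side IH h1 h3 nD0 (fun x xD => ltac:(have [a _ c] := (hD x).1 xD; exact: (conj a c))) Dsub hDz sDzM3.
have e2 := side IH h2 h3 nD0 (fun x xD => ltac:(have [_ b c] := (hD x).1 xD; exact: (conj b c))) Dsub hDz sDzM3.
by rewrite -e1 -e2 eqxx in n12.
Qed.

Lemma core k : forall M1 M2 D : {vspace L}, maximal_subalgebra br M1 -> maximal_subalgebra br M2 ->
  M1 != M2 -> (forall x, x \in D <-> [/\ x \in M1, x \in M2 & nil x]) ->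
  (n - \dim D <= k)%N -> D = 0%VS.
Proof.
elim: k => [|k IH] M1 M2 D h1 h2 n12 hD hd; apply: (core_step _ h1 h2 n12 hD).
  move=> M1' M3' D3 _ _ _ _ lt; exfalso.
  have le := dimvS (subvf D3); move: hd lt le; lia.
move=> M1' M3' D3 h1' h3' n13 hD3 lt; apply: (IH M1' M3') => //.
have le := dimvS (subvf D3); move: hd lt le; lia.
Qed.

Lemma part3 (M1 M2 : {vspace L}) :
  maximal_subalgebra br M1 -> maximal_subalgebra br M2 -> M1 != M2 ->
  (forall x, x \in (M1 :&: M2)%VS -> acts_nil br x -> x = 0) /\ is_abelian br (M1 :&: M2)%VS.
Proof.
move=> h1 h2 n12; have [D hD] := capsp M2 h1.
have D0 := core h1 h2 n12 hD (leqnn _).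
have [hM1 nM1 _] := h1; have [hM2 _ _] := h2; have TM1 := tri hM1 nM1.
have key : forall x, x \in (M1 :&: M2)%VS -> acts_nil br x -> x = 0.
  move=> x /memv_capP [x1 x2] nx; have : x \in D by apply/hD.
  by rewrite D0 memv0 => /eqP.
split => // x y /memv_capP [x1 x2] /memv_capP [y1 y2].
apply: key; first by rewrite memv_cap hM1 ?hM2.
exact: (tri_br lie TM1 x1 y1).
Qed.

Lemma part4 : two_generated br.
Proof.
case: (classic (exists x, x != 0 /\ nil x)) => [[x [nx0 nx]]|hno].
  have lf : <[x]>%VS != fullv by apply/eqP => h; apply: (line_ideal_abel h).
  have [M0 [h0 sxM0]] := exists_max (@subalg_line x) lf.
  have [_ nM0 _] := h0.
  have [y yM0] := neq_full_ex nM0.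
  exists x, y => S hS xS yS; apply: NNPP => Sf.
  have [M' [h' sSM']] := exists_max hS (introN eqP Sf).
  case: (eqVneq M0 M') => [e|ne].
    by move: yM0; rewrite e (subvP sSM' _ yS).
  have [key _] := part3 h0 h' ne.
  have xM0 : x \in M0 by apply: (subvP sxM0); exact: memv_line.
  have := key x ltac:(by rewrite memv_cap xM0 (subvP sSM' _ xS)) nx.
  by move/eqP; rewrite (negPf nx0).
have [x nx0] : exists x : L, x != 0.
  apply: NNPP => h; apply: not_abel => a b.
  have -> : a = 0 by apply: NNPP => ha; apply: h; exists a; apply/eqP.
  exact: (br0l lie).
have [C hC] : exists C : {vspace L}, forall z, z \in C <-> br x z = 0.
  apply: vsp_pred; first exact: (br0r lie).
  by move=> a u w hu hw; rewrite (brDZr lie) hu hw scaler0 addr0.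
have Cf : C != fullv.
  apply/eqP => eC.
  have idl : forall z y, y \in <[x]>%VS -> br z y \in <[x]>%VS.
    move=> z y /vlineP [a ->]; rewrite (brZr lie) (brN lie).
    have zC : z \in C by rewrite eC memvf.
    rewrite ((hC z).1 zC).
    by rewrite oppr0 scaler0 mem0v.
  case: (ideal_triv idl) => h; last exact: (line_ideal_abel h).
  have : x \in <[x]>%VS by exact: memv_line.
  by rewrite h memv0 (negPf nx0).
have [y yC] := neq_full_ex Cf.
exists x, y => S hS xS yS; apply: NNPP => Sf.
have TS := tri hS (introN eqP Sf).
have nb := tri_br lie TS xS yS.
have b0 : br x y = 0.
  by apply: NNPP => hb; apply: hno; exists (br x y); split => //; apply/eqP.
by move: yC; have -> : y \in C by apply/hC.
Qed.

End Main.

Theorem theorem4p4 (F : fieldType) (L : vectType F) (br : L -> L -> L) :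
  lie_axioms br -> is_simple br ->
  (forall S : {vspace L}, is_subalgebra br S -> S != fullv%VS ->
     triangulable_on br S) ->
  [/\ (* (1) *)
      (forall M : {vspace L}, maximal_subalgebra br M ->
         (is_abelian br M /\ (forall x, x \in M -> acts_nil br x -> x = 0))
         \/ (exists N : {vspace L},
               [/\ is_nil_of br M N, N != 0%VS & maximal_nil_subalgebra br N])),
      (* (2) *)
      (forall K : {vspace L}, K != 0%VS -> maximal_nil_subalgebra br K ->
         exists N : {vspace L},
           is_normalizer br K N /\ maximal_subalgebra br N),
      (* (3) *)
      (forall M1 M2 : {vspace L},
         maximal_subalgebra br M1 -> maximal_subalgebra br M2 -> M1 != M2 ->
         (forall x, x \in (M1 :&: M2)%VS -> acts_nil br x -> x = 0) /\
         is_abelian br (M1 :&: M2)%VS) &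
      (* (4) *)
      two_generated br].
Proof.
move=> lie simp tri; split.
- by move=> M; apply: (part1 lie simp tri).
- by move=> K; apply: (part2 lie simp tri).
- by move=> M1 M2; apply: (part3 lie simp tri).
- exact: (part4 lie simp tri).
Qed.
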